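(* Let $l,t,s,x,n$ be integers with $n\geq 2s+1$, $t\geq l$ and $2\leq l\leq x\leq s$. Then $$ex(n,\{K_{l,t},M_{s+1}\},x)\leq (t-1)\binom{x}{l}+(l-1)n-\left\lceil\frac{x(l-1)}{2}\right\rceil+ex(2(s-x)+1,K_{l,t}).$$
   Context: All graphs are finite and simple. $ex(m,K_{l,t})$ is the maximum number of edges of an $m$-vertex graph with no copy of the complete bipartite graph $K_{l,t}$; $M_{s+1}$ is the matching of $s+1$ disjoint edges. For a graph $G$ with matching number at most $s$, say $X\subseteq V(G)$ is admissible if $|X|+\sum_{i=1}^m\lfloor |V(C_i)|/2\rfloor\leq s$, where $C_1,\dots,C_m$ are the components of $G-X$; let $x(G)$ be the maximum size of an admissible set. Let $\mathscr{G}_x$ be the set of graphs on $n$ vertices containing neither $K_{l,t}$ nor $M_{s+1}$ as a subgraph and with $x(G)=x$, and $ex(n,\{K_{l,t},M_{s+1}\},x)=\max_{G\in\mathscr{G}_x}e(G)$. *)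

(* Defs.v *)
From mathcomp Require Import all_boot all_order all_algebra.
Set Implicit Arguments. Unset Strict Implicit. Unset Printing Implicit Defensive.

Definition simple_graph (m : nat) (E : {set {set 'I_m}}) : bool :=
  [forall e in E, #|e| == 2].

Definition adj (m : nat) (E : {set {set 'I_m}}) (u v : 'I_m) : bool :=
  [set u; v] \in E.

Definition has_Klt (m l t : nat) (E : {set {set 'I_m}}) : bool :=
  [exists A : {set 'I_m}, exists B : {set 'I_m},
    [&& #|A| == l, #|B| == t, [disjoint A & B] &
        [forall a in A, forall b in B, adj E a b]]].

Definition has_matching (m k : nat) (E : {set {set 'I_m}}) : Prop :=
  exists M : {set {set 'I_m}},
    [/\ M \subset E, #|M| = k &
        forall e f, e \in M -> f \in M -> e != f -> [disjoint e & f]].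

Definition ex_Klt (m l t : nat) : nat :=
  \max_(E : {set {set 'I_m}} |
          simple_graph E && ~~ has_Klt l t E) #|E|.

Definition restr_adj (m : nat) (E : {set {set 'I_m}}) (X : {set 'I_m}) :
  rel 'I_m := fun u v => [&& u \notin X, v \notin X & adj E u v].

Definition components_minus (m : nat) (E : {set {set 'I_m}})
  (X : {set 'I_m}) : {set {set 'I_m}} :=
  [set [set y | connect (restr_adj E X) x y] | x in ~: X].

Definition admissible (m s : nat) (E : {set {set 'I_m}}) (X : {set 'I_m}) :
  bool :=
  #|X| + \sum_(C in components_minus E X) #|C|./2 <= s.

Definition xG (m s : nat) (E : {set {set 'I_m}}) : nat :=
  \max_(X : {set 'I_m} | admissible s E X) #|X|.

(* Main.v *)
Require Import Defs.
From mathcomp Require Import all_boot all_order all_algebra zify.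
Set Implicit Arguments. Unset Strict Implicit.

Section Basic.
Variables (m : nat) (E : {set {set 'I_m}}).
Hypothesis simE : simple_graph E.

Lemma simE2 e : e \in E -> #|e| = 2.
Proof. by move=> He; apply/eqP; move/forall_inP: simE; apply. Qed.

Lemma adjC u v : adj E u v = adj E v u.
Proof. by rewrite /adj setUC. Qed.

Lemma adj_irr v : ~~ adj E v v.
Proof. apply/negP=> /simE2; by rewrite setUid cards1. Qed.

Lemma pairs_set2 (a b p q : 'I_m) : a != b ->
  ([set p; q] == [set a; b]) = ((p == a) && (q == b)) || ((p == b) && (q == a)).
Proof.
move=> nab; apply/idP/idP.
  move/eqP=> H.
  have hp : p \in [set a; b] by rewrite -H set21.
  have hq : q \in [set a; b] by rewrite -H set22.
  have ha : a \in [set p; q] by rewrite H set21.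
  have hb : b \in [set p; q] by rewrite H set22.
  move: hp hq ha hb; rewrite !inE.
  case/orP=>/eqP-> ; case/orP=>/eqP->; rewrite ?eqxx //=; move: nab;
   rewrite eq_sym => /negbTE -> //; rewrite eq_sym => /negbTE -> //.
by case/orP=> /andP[/eqP-> /eqP->] //; rewrite setUC.
Qed.

Lemma dcount (g : 'I_m -> 'I_m -> nat) :
  \sum_v \sum_(u | adj E v u) g v u =
  \sum_(e in E) \sum_(p : 'I_m * 'I_m | [set p.1; p.2] == e) g p.1 p.2.
Proof.
rewrite pair_big_dep /= (partition_big (fun p : 'I_m * 'I_m => [set p.1; p.2]) (mem E)) /=.
  apply: eq_bigr => e He; apply: eq_bigl => p.
  by apply/andP/idP=> [[] //| H]; split=> //; rewrite /adj (eqP H).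
by [].
Qed.

Lemma pair_sum e (g : 'I_m -> 'I_m -> nat) : e \in E ->
  exists a b, [/\ a != b, e = [set a; b] &
  \sum_(p : 'I_m * 'I_m | [set p.1; p.2] == e) g p.1 p.2 = g a b + g b a].
Proof.
move=> He; have /cards2P [a [b [nab ->]]] : #|e| == 2 by rewrite simE2.
exists a, b; split=> //.
rewrite (bigD1 (a, b)) /=; last by rewrite eqxx.
rewrite (bigD1 (b, a)) /=; last first.
  by rewrite setUC eqxx /= xpair_eqE eq_sym (negbTE nab).
rewrite big1 ?addn0 // => p /andP[/andP[]]; rewrite pairs_set2 //.
by case: p => p1 p2 /=; rewrite !xpair_eqE => /orP[] -> /=; rewrite ?andbF.
Qed.

End Basic.

Lemma binom_lin d l : 0 < l -> d <= l.-1 + 'C(d, l).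
Proof.
case: l => // l _ /=; elim: d => [|d IH]; first by [].
rewrite binS; case: (leqP l d) => H.
  have : 0 < 'C(d, l) by rewrite bin_gt0.
  lia.
lia.
Qed.

Section Part1.
Variables (m l t : nat) (E : {set {set 'I_m}}) (X : {set 'I_m}).
Hypothesis simE : simple_graph E.
Hypothesis noK : ~ has_Klt l t E.

Definition NX v := [set u in X | adj E v u].

Lemma sum_binom : \sum_v 'C(#|NX v|, l) <= (t - 1) * 'C(#|X|, l).
Proof.
have -> : \sum_v 'C(#|NX v|, l) =
   \sum_v \sum_(S : {set 'I_m} | (S \subset NX v) && (#|S| == l)) 1.
  apply: eq_bigr => v _; rewrite -cards_draws -sum1_card.
  by apply: eq_bigl => S; rewrite inE.
rewrite (exchange_big_dep xpredT) //= -cards_draws mulnC -sum_nat_const [X in _ <= X]big_mkcond /=.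

apply: leq_sum => S _.
rewrite sum_nat_cond_const muln1.
rewrite inE; case: ifP => HS.
  case/andP: HS => SX /eqP Sl.
  rewrite leqNgt; apply/negP => Ht.
  move: Ht; set c := #|_| => Ht.
  have : t <= c by lia.
  case/card_geqP => s [us ss subs].
  apply: noK; apply/existsP; exists S; apply/existsP; exists [set v in s].
  apply/and4P; split.
  - by rewrite Sl.
  - by apply/eqP; rewrite cardsE; move/card_uniqP: (us) => ->; rewrite ss.
  - apply/pred0P => v /=; apply/negP => /andP[vS]; rewrite inE => /subs.
    rewrite inE => /andP[/subsetP /(_ _ vS)]; rewrite inE => /andP[_].
    by rewrite (negbTE (adj_irr simE v)).
  - apply/forall_inP => a aS; apply/forall_inP => b; rewrite inE => /subs.
    rewrite inE => /andP[/subsetP /(_ _ aS)]; rewrite inE => /andP[_].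
    by rewrite adjC.
rewrite leqn0 cards_eq0; apply/eqP/setP => v; rewrite !inE.
apply/negP => /andP[SN /eqP Sl]; move: HS; rewrite Sl eqxx andbT.
move/negbT/negP; apply; apply: subset_trans SN _.
by apply/subsetP => u; rewrite inE => /andP[].
Qed.

Definition ET := [set e in E | ~~ [disjoint e & X]].

Lemma part1 : 0 < l ->
  2 * #|ET| + #|X| * l.-1 <= 2 * (m * l.-1) + 2 * ((t - 1) * 'C(#|X|, l)).
Proof.
move=> l0.
pose c v := if v \in X then 1 else 2.
have H1 : \sum_v c v * #|NX v| = 2 * #|ET|.
  have -> : \sum_v c v * #|NX v| =
     \sum_v \sum_(u | adj E v u) (c v * (u \in X)).
    apply: eq_bigr => v _; rewrite -big_distrr /=; congr (_ * _).
    rewrite -sum1_card [LHS]big_mkcond [RHS]big_mkcond /=.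
    apply: eq_bigr => u _; rewrite inE; case: (adj E v u); case: (u \in X) => //.
  rewrite (@dcount _ E (fun v u => c v * (u \in X))).
  have -> : \sum_(e in E)
      \sum_(p : 'I_m * 'I_m | [set p.1; p.2] == e) c p.1 * (p.2 \in X) =
      \sum_(e in E) 2 * (e \in ET).
    apply: eq_bigr => e He.
    have [a [b [nab Hab ->]]] := pair_sum simE (fun v u => c v * (u \in X)) He.
    rewrite inE He /= Hab /c.
    have -> : [disjoint [set a; b] & X] = ~~ (a \in X) && ~~ (b \in X).
      apply/pred0P/andP.
        move=> H; split; apply/negP => Hx.
          by move: (H a) => /=; rewrite set21 Hx.
        by move: (H b) => /=; rewrite set22 Hx.
      by case=> Ha Hb v /=; rewrite !inE; case/orP: (orbN (v == a)) => [/eqP->|];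
        rewrite ?(negbTE Ha) ?andbF //; case/orP: (orbN (v == b)) => [/eqP->|];
        rewrite ?(negbTE Hb) ?andbF ?orbF // => /negbTE -> /negbTE ->.
    by case: (a \in X); case: (b \in X).
  rewrite -big_distrr /=; congr (_ * _).
  rewrite -sum1_card big_mkcond [RHS]big_mkcond /=; apply: eq_bigr => e _.
  by rewrite inE; case: (e \in E).
have H2 : forall v, c v * #|NX v| <= c v * l.-1 + 2 * 'C(#|NX v|, l).
  move=> v; have := binom_lin #|NX v| l0.
  by rewrite /c; case: (v \in X); lia.
have H3 : \sum_v c v + #|X| = 2 * m.
  rewrite -sum1_card [X in _ + X = _]big_mkcond -big_split /=.
  rewrite (eq_bigr (fun _ => 2)); last by move=> v _; rewrite /c; case: (v \in X).
  by rewrite sum_nat_const cardT size_enum_ord mulnC.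
have H4 : \sum_v c v * #|NX v| <= \sum_v (c v * l.-1 + 2 * 'C(#|NX v|, l)).
  by apply: leq_sum => v _; exact: H2.
rewrite big_split /= -!big_distrl -big_distrr /= H1 in H4.
have H5 := sum_binom.
move: H3 H4 H5; set S1 := \sum_(i < m) c i; set S2 := \sum_(i < m) 'C(#|NX i|, l).
move=> H3 H4 H5.
have H6 : (S1 + #|X|) * l.-1 = 2 * m * l.-1 by rewrite H3.
rewrite mulnDl in H6.
lia.
Qed.

End Part1.

Section Part2.
Variables (n l t k : nat) (E : {set {set 'I_n}}) (X : {set 'I_n}).
Hypothesis simE : simple_graph E.
Hypothesis noK : ~ has_Klt l t E.
Hypothesis l2 : 2 <= l.
Hypothesis lt : l <= t.
Hypothesis hsum : \sum_(C in components_minus E X) #|C|./2 <= k.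

Local Notation R := (restr_adj E X).

Lemma symR : symmetric R.
Proof. by move=> u v; rewrite /restr_adj adjC andbCA. Qed.

Let csym := sym_connect_sym symR.

Local Notation comp v := [set y | connect R v y].
Definition rep v := odflt v [pick y in comp v].

Lemma conn_eq v w : connect R v w -> comp v = comp w.
Proof. by move=> H; apply/setP => y; rewrite !inE (same_connect csym H y). Qed.

Lemma rep_in v : connect R v (rep v).
Proof.
rewrite /rep; case: pickP => [y|] /=; first by rewrite inE.
by move=> _ /=; rewrite connect0.
Qed.

Lemma rep_eq v w : connect R v w -> rep v = rep w.
Proof.
move=> H; rewrite /rep (conn_eq H); case: pickP => //= H0.
by move: (H0 w); rewrite inE connect0.
Qed.

Lemma rep_rep v : rep (rep v) = rep v.
Proof. by rewrite -(rep_eq (rep_in v)). Qed.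

Lemma conn_notX v y : connect R v y -> y != v -> y \notin X.
Proof.
rewrite csym => /connectP [p]; case: p => [|z p] /=.
  by move=> _ ->; rewrite eqxx.
by move=> /andP[Hyz _] _ _; case/and3P: Hyz.
Qed.

Definition Y := [set v | (v \notin X) && (rep v != v)].

Lemma repX v : v \notin X -> v \notin Y -> rep v = v.
Proof. by move=> Hv; rewrite inE Hv /= => /negbNE/eqP. Qed.

Lemma rep_notY v : rep v \notin Y.
Proof. by rewrite inE rep_rep eqxx andbF. Qed.

Lemma Ycard : #|Y| <= 2 * k.
Proof.
pose P := components_minus E X.
have HP : P = equivalence_partition (connect R) (~: X).
  rewrite /P /components_minus /equivalence_partition; apply: eq_in_imset => x.
  rewrite inE => Hx; apply/setP => y; rewrite !inE.
  case Hc: (connect R x y); rewrite /= ?andbT ?andbF //.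
  case: (y =P x) => [-> //|/eqP Hyx]; by rewrite (conn_notX Hc Hyx).
have partP : partition P (~: X).
  rewrite HP; apply: equivalence_partitionP => x y z _ _ _ /=; split.
    exact: connect0.
  by move=> Hxy; apply: (same_connect csym Hxy).
have -> : #|Y| = \sum_(x in ~: X | x \in Y) 1.
  rewrite sum_nat_cond_const muln1; apply: eq_card => v; rewrite !inE.
  by case: (v \in X).
rewrite (set_partition_big_cond _ partP) /=.
apply: (@leq_trans (\sum_(C in P) 2 * #|C|./2)); last by rewrite -big_distrr /= leq_mul2l hsum orbT.
apply: leq_sum => C; rewrite /P /components_minus => /imsetP [x Hx ->].
rewrite sum_nat_cond_const muln1.
set C' := [set y | connect R x y].
have H1 : #|[set y | (y \in C') && (y \in Y)]| <= #|C' :\ rep x|.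
  apply: subset_leq_card; apply/subsetP => y; rewrite !inE => /andP[-> /andP[_ Hy]].
  rewrite andbT; apply: contra Hy => /eqP ->; exact/eqP/rep_rep.
have H2 := cardsD1 (rep x) C'.
have H3 : rep x \in C' by rewrite inE rep_in.
rewrite H3 in H2.
have H4 := odd_double_half #|C'|.
rewrite -muln2 in H4.
have H5 : odd #|C'| <= 1 by case: (odd _).
rewrite /= in H2. move: H1 H2 H4 H5; set a := #|C'|; set b := #|C' :\ rep x|; set c := #|_|; set o := nat_of_bool (odd a); set h := a./2. lia.
Qed.

Definition f v : 'I_(2 * k).+1 :=
  if v \in Y then inord (index v (enum Y)).+1 else ord0.

Lemma idx_lt v : v \in Y -> index v (enum Y) < 2 * k.
Proof.
move=> Hv; apply: leq_trans Ycard; rewrite cardE index_mem mem_enum //.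
Qed.

Lemma fY v : v \in Y -> val (f v) = (index v (enum Y)).+1.
Proof. by move=> Hv; rewrite /f Hv; apply: inordK; rewrite ltnS idx_lt. Qed.

Lemma f_nz v : (f v != ord0) = (v \in Y).
Proof.
case Hv: (v \in Y); last by rewrite /f Hv eqxx.
by rewrite -(inj_eq val_inj) fY.
Qed.

Lemma f_injY v w : v \in Y -> w \in Y -> f v = f w -> v = w.
Proof.
move=> Hv Hw H; have := congr1 val H; rewrite !fY // => [[]] /(congr1 (nth v (enum Y))).
by rewrite !nth_index ?mem_enum.
Qed.

Lemma f_inj_comp v w : v \notin X -> connect R v w -> f v = f w -> v = w.
Proof.
move=> HvX Hc H.
case Hv: (v \in Y); case Hw: (w \in Y).
- exact: f_injY.
- by move: (f_nz v) (f_nz w); rewrite Hv Hw H => ->.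
- by move: (f_nz v) (f_nz w); rewrite Hv Hw H => ->.
case: (w =P v) => [//|/eqP Hwv].
have HwX := conn_notX Hc Hwv.
by rewrite -(repX HvX (negbT Hv)) -(repX HwX (negbT Hw)) (rep_eq Hc).
Qed.

Definition EY := [set e in E | [disjoint e & X]].

Lemma EY_edge e : e \in EY -> exists u v,
  [/\ e = [set u; v], u != v, u \notin X, v \notin X & adj E u v].
Proof.
rewrite inE => /andP[He Hd].
have /cards2P [u [v [nuv Huv]]] : #|e| == 2 by rewrite (simE2 simE).
exists u, v; split => //.
- apply/negP => Hu; move/pred0P: Hd => /(_ u) /=; by rewrite Huv set21 Hu.
- apply/negP => Hu; move/pred0P: Hd => /(_ v) /=; by rewrite Huv set22 Hu.
by rewrite /adj -Huv.
Qed.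

Lemma Radj p q : p \notin X -> q \notin X -> adj E p q -> R p q.
Proof. by move=> *; apply/and3P. Qed.

Lemma f_set2 u v : f @: [set u; v] = [set f u; f v].
Proof. by rewrite imsetU1 imset_set1. Qed.

Lemma fuv u v : u \notin X -> v \notin X -> adj E u v -> f u != f v.
Proof.
move=> Hu Hv Huv; apply/eqP => H.
have := f_inj_comp Hu (connect1 (Radj Hu Hv Huv)) H => Heq.
by move: Huv; rewrite Heq (negbTE (adj_irr simE v)).
Qed.

Definition F : {set {set 'I_(2 * k).+1}} := [set f @: e | e : {set 'I_n} in EY].

Lemma simF : simple_graph F.
Proof.
apply/forall_inP => _ /imsetP [e He ->].
have [u [v [-> nuv Hu Hv Huv]]] := EY_edge He.
by rewrite f_set2 cards2 fuv.
Qed.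

Lemma f_eq p q : f p = f q -> f p != ord0 -> p = q.
Proof.
move=> H Hnz; have pY : p \in Y by rewrite -f_nz.
have qY : q \in Y by rewrite -f_nz -H.
exact: f_injY.
Qed.

Lemma same_edge u v u' v' : u \notin X -> v \notin X -> u' \notin X -> v' \notin X ->
  connect R u v -> connect R u' v' -> f u = f u' -> f v = f v' -> f u != f v ->
  u = u' /\ v = v'.
Proof.
move=> Hu Hv Hu' Hv' c1 c2 e1 e2 nz.
case: (f u =P ord0) => [H0|/eqP H0].
  have Hv0 : f v != ord0 by rewrite -H0 eq_sym.
  have vv := f_eq e2 Hv0; subst v'.
  split => //; apply: f_inj_comp e1 => //.
  apply: connect_trans c1 _; by rewrite csym.
have uu := f_eq e1 H0; subst u'.
split => //; apply: f_inj_comp e2 => //.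
apply: connect_trans c2; by rewrite csym.
Qed.

Lemma cardF : #|F| = #|EY|.
Proof.
apply: card_in_imset => ee1 ee2 H1 H2.
have [u [v [E1 nuv Hu Hv Huv]]] := EY_edge H1.
have [u' [v' [E2 nuv' Hu' Hv' Huv']]] := EY_edge H2.
have c1 := connect1 (Radj Hu Hv Huv).
have c2 := connect1 (Radj Hu' Hv' Huv').
have c2' := connect1 (Radj Hv' Hu' (etrans (adjC _ _ _) Huv')).
rewrite E1 E2 !f_set2 => /eqP; rewrite pairs_set2 ?fuv //.
case/orP => /andP [/eqP e1 /eqP e2].
  by have [-> ->] := same_edge Hu Hv Hu' Hv' c1 c2 e1 e2 (fuv Hu Hv Huv).
have [-> ->] := same_edge Hu Hv Hv' Hu' c1 c2' e1 e2 (fuv Hu Hv Huv).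
by rewrite setUC.
Qed.

Lemma adjF a b : a != b -> adj F a b ->
  exists p q, [/\ p \notin X, q \notin X, adj E p q, f p = a & f q = b].
Proof.
move=> nab; rewrite /adj => /imsetP [e He Hab].
have [u [v [Ee nuv Hu Hv Huv]]] := EY_edge He.
have : [set f u; f v] == [set a; b] by rewrite -f_set2 -Ee Hab.
rewrite pairs_set2 // => /orP [/andP[/eqP <- /eqP <-] | /andP [/eqP<- /eqP<-]].
  by exists u, v.
by exists v, u; rewrite -/(adj E v u) adjC.
Qed.

Lemma nonhub (A : {set 'I_(2 * k).+1}) : 2 <= #|A| -> exists a0, a0 \in A /\ a0 != ord0.
Proof.
move=> HA; have : 0 < #|A :\ ord0|.
  have := cardsD1 ord0 A; case: (ord0 \in A) => /= H; rewrite H ?add0n ?add1n ?ltnS in HA; [exact: HA | exact: ltnW HA].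
by case/card_gt0P => a0; rewrite !inE => /andP[H1 H2]; exists a0.
Qed.

Lemma noKF : ~~ has_Klt l t F.
Proof.
apply/negP => /existsP [A /existsP [B /and4P [/eqP cA /eqP cB dAB /forall_inP adjAB]]].
have adjAB' : forall a b, a \in A -> b \in B -> adj F a b.
  by move=> a b Ha Hb; move/forall_inP: (adjAB a Ha); apply.
have nAB : forall a b, a \in A -> b \in B -> a != b.
  move=> a b Ha Hb; apply/eqP => Hab; subst b.
  by move/pred0P: dAB => /(_ a) /=; rewrite Ha Hb.
have [a0 [Ha0 a0nz]] : exists a0, a0 \in A /\ a0 != ord0 by apply: nonhub; lia.
have [b0 [Hb0 b0nz]] : exists b0, b0 \in B /\ b0 != ord0 by apply: nonhub; lia.
have [p0 [q0 [Hp0 Hq0 Hpq0 fp0 fq0]]] := adjF (nAB _ _ Ha0 Hb0) (adjAB' _ _ Ha0 Hb0).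
pose h a := odflt p0 [pick y | (y \in Y) && (f y == a)].
have h_spec : forall p, f p != ord0 -> h (f p) = p.
  move=> p Hp; have pY : p \in Y by rewrite -f_nz.
  rewrite /h; case: pickP => [y /andP [yY /eqP fy] | H] /=.
    exact: f_injY yY pY fy.
  by move: (H p); rewrite pY eqxx.
have hp0 : h a0 = p0 by rewrite -fp0 h_spec ?fp0.
have hq0 : h b0 = q0 by rewrite -fq0 h_spec ?fq0.
have c00 : connect R p0 q0 by apply: connect1; apply: Radj.
have key : forall a, a \in A :|: B -> a != ord0 ->
    [/\ h a \in Y, f (h a) = a & connect R p0 (h a)].
  move=> a; rewrite inE => /orP [Ha|Hb] anz.
    have [p [q [Hp Hq Hpq fp fq]]] := adjF (nAB _ _ Ha Hb0) (adjAB' _ _ Ha Hb0).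
    have hp : h a = p by rewrite -fp h_spec ?fp.
    have qq : q = q0 by rewrite -hq0 -fq h_spec ?fq.
    subst q; rewrite hp -f_nz fp; split => //.
    apply: connect_trans c00 _; rewrite csym; apply: connect1; exact: Radj.
  have [p [q [Hp Hq Hpq fp fq]]] := adjF (nAB _ _ Ha0 Hb) (adjAB' _ _ Ha0 Hb).
  have hq : h a = q by rewrite -fq h_spec ?fq.
  have pp : p = p0 by rewrite -hp0 -fp h_spec ?fp.
  subst p; rewrite hq -f_nz fq; split => //.
  apply: connect1; exact: Radj.
pose g a := if a == ord0 then rep p0 else h a.
have gp : forall a p, a \in A :|: B -> f p = a -> p \notin X -> connect R p0 p -> g a = p.
  move=> a p Ha fp Hp c0p; rewrite /g; case: (a =P ord0) => [a0E|/eqP anz].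
    have pY : p \notin Y by rewrite -f_nz fp a0E eqxx.
    by rewrite (rep_eq c0p) (repX Hp pY).
  by rewrite -fp h_spec ?fp.
have g_adj : forall a b, a \in A -> b \in B -> adj E (g a) (g b).
  move=> a b Ha Hb.
  have [p [q [Hp Hq Hpq fp fq]]] := adjF (nAB _ _ Ha Hb) (adjAB' _ _ Ha Hb).
  have HaAB : a \in A :|: B by rewrite inE Ha.
  have HbAB : b \in A :|: B by rewrite inE Hb orbT.
  have Rpq : connect R p q by apply: connect1; apply: Radj.
  have Rqp : connect R q p by rewrite csym.
  have [c0p c0q] : connect R p0 p /\ connect R p0 q.
    case: (a =P ord0) => [a0E|/eqP anz].
      have bnz : b != ord0 by rewrite -a0E eq_sym nAB.
      have [_ hb c0] := key _ HbAB bnz.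
      have hq : h b = q by rewrite -fq h_spec ?fq.
      rewrite hq in c0; split => //; exact: connect_trans c0 Rqp.
    have [_ ha c0] := key _ HaAB anz.
    have hp : h a = p by rewrite -fp h_spec ?fp.
    rewrite hp in c0; split => //; exact: connect_trans c0 Rpq.
  by rewrite (gp a p) ?(gp b q).
have g_inj : {in A :|: B &, injective g}.
  move=> a b Ha Hb; rewrite /g.
  case: (a =P ord0) => [->|/eqP anz]; case: (b =P ord0) => [->|/eqP bnz] //.
  - have [hY _ _] := key _ Hb bnz => H; move: hY; rewrite -H.
    by rewrite (negbTE (rep_notY p0)).
  - have [hY _ _] := key _ Ha anz => H; move: hY; rewrite H.
    by rewrite (negbTE (rep_notY p0)).
  - have [_ ha _] := key _ Ha anz; have [_ hb _] := key _ Hb bnz.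
    by move=> H; rewrite -ha -hb H.
have subA : {subset A <= A :|: B} by move=> a Ha; rewrite inE Ha.
have subB : {subset B <= A :|: B} by move=> a Ha; rewrite inE Ha orbT.
apply: noK; apply/existsP; exists (g @: A); apply/existsP; exists (g @: B).
apply/and4P; split.
- by rewrite card_in_imset ?cA //; exact: (sub_in2 subA g_inj).
- by rewrite card_in_imset ?cB //; exact: (sub_in2 subB g_inj).
- apply/pred0P => v /=; apply/negP => /andP [/imsetP [a Ha ->] /imsetP [b Hb Heq]].
  have := g_inj _ _ (subA _ Ha) (subB _ Hb) Heq => Hab; subst b.
  by move: (nAB _ _ Ha Hb); rewrite eqxx.
apply/forall_inP => _ /imsetP [a Ha ->]; apply/forall_inP => _ /imsetP [b Hb ->].
exact: g_adj.
Qed.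

Lemma part2 : #|EY| <= ex_Klt (2 * k).+1 l t.
Proof.
rewrite -cardF /ex_Klt; apply: (leq_bigmax_cond F).
by rewrite simF noKF.
Qed.

End Part2.
Unset Implicit Arguments. Set Strict Implicit.
Import GRing.Theory Num.Theory.
Local Open Scope ring_scope.
Theorem lemma3p4 (l t s x n : nat) :
  (2 * s + 1 <= n)%N -> (l <= t)%N -> (2 <= l)%N -> (l <= x)%N -> (x <= s)%N ->
  forall E : {set {set 'I_n}},
    simple_graph E -> ~ has_Klt l t E -> ~ has_matching (s + 1) E ->
    xG s E = x ->
    (#|E| : int) <=
      ((t - 1) * 'C(x, l))%N%:Z + ((l - 1) * n)%N%:Z
      - (uphalf (x * (l - 1)))%:Z
      + (ex_Klt (2 * (s - x) + 1) l t)%:Z.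
Proof.
move=> Hn Hlt Hl2 Hlx Hxs E simE noK _ HxG.
have [X [admX cX]] : exists X, admissible s E X /\ #|X| = x.
  case: (pickP (fun X => admissible s E X)) => [X0 HX0 | H0].
    move: HxG; rewrite /xG (bigmax_eq_arg X0) // => <-.
    exists [arg max_(X > X0 | admissible s E X) #|X|]; split => //.
    by case: arg_maxnP.
  move: HxG; rewrite /xG big_pred0 // => Hx0; subst x.
  by move: (leq_trans Hl2 Hlx).
have hsum : (\sum_(C in components_minus E X) #|C|./2 <= s - x)%N.
  move: admX; rewrite /admissible cX; lia.
have l0 : (0 < l)%N by apply: leq_trans Hl2.
have P1 := @part1 n l t E X simE noK l0.
have P2 := @part2 n l t (s - x) E X simE noK Hl2 Hlt hsum.
have Hsplit : #|E| = (#|ET E X| + #|EY E X|)%N.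
  rewrite -(cardsID [set e : {set 'I_n} | [disjoint e & X]] E) addnC; congr (_ + _)%N.
    by apply/eq_card => e; rewrite !inE andbC.
  by apply/eq_card => e; rewrite !inE andbC.
rewrite addn1 Hsplit.
rewrite cX -subn1 in P1.
move: P1 P2; set a := #|ET E X|; set b := #|EY E X|; set ex := ex_Klt _ l t.
set K := 'C(x, l).
move=> P1 P2.
have H1 := uphalf_half (x * (l - 1)).
have H2 := odd_double_half (x * (l - 1)).
move: H1 H2; set o := nat_of_bool (odd _); set h := (x * (l - 1))./2.
rewrite -muln2 => H1 H2.
have Ho : (o <= 1)%N by rewrite /o; case: (odd _).
rewrite H1.
lia.
Qed.
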